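(* Let $X$ and $Y$ be compact Hausdorff spaces and let $A(X)\subseteq C(X)$ and $A(Y)\subseteq C(Y)$ be (real) vector subspaces that contain the constant functions and precisely separate points from closed sets. If $T: A(X)\to A(Y)$ is a linear order isomorphism, then there is a homeomorphism $h:X\to Y$ such that $Tf = T1_X\cdot (f\circ h^{-1})$ for all $f\in A(X)$.
   Context: All function spaces are real. $C(X)$ denotes the real-valued continuous functions on $X$, and $1_X$ the constant function $1$ on $X$. A subspace $A(X)\subseteq C(X)$ separates points from closed sets if for every $x\in X$ and every closed $F\subseteq X$ with $x\notin F$ there is $f\in A(X)$ with $f(x)=1$ and $f=0$ on $F$; it precisely separates points from closed sets if moreover such $f$ can always be chosen with values in $[0,1]$. A linear bijection $T:A(X)\to A(Y)$ is an order isomorphism if for every $f\in A(X)$, $f\ge 0$ (pointwise) if and only if $Tf\ge 0$. *)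

(* Defs.v *)
From HB Require Import structures.
From mathcomp Require Import all_boot all_order all_algebra.
From mathcomp Require Import all_classical all_reals all_analysis.
Set Implicit Arguments. Unset Strict Implicit. Unset Printing Implicit Defensive.
Import Order.TTheory GRing.Theory Num.Theory.
Import numFieldNormedType.Exports.
Local Open Scope classical_set_scope.
Local Open Scope ring_scope.

Definition is_function_space (R : realType) (X : topologicalType)
  (A : set (X -> R)) : Prop :=
  [/\ forall f, A f -> continuous f,
      A (fun _ => 0),
      (forall f g, A f -> A g -> A (fun x => f x + g x)) &
      (forall (a : R) f, A f -> A (fun x => a * f x))].

Definition contains_constants (R : realType) (X : topologicalType)
  (A : set (X -> R)) : Prop := forall c : R, A (fun _ => c).

Definition precisely_separates (R : realType) (X : topologicalType)
  (A : set (X -> R)) : Prop :=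
  forall (x : X) (F : set X), closed F -> ~ F x ->
    exists f, [/\ A f, f x = 1, (forall y, F y -> f y = 0) &
                   (forall y, 0 <= f y <= 1)].

Definition linear_order_iso (R : realType) (X Y : topologicalType)
  (A : set (X -> R)) (B : set (Y -> R)) (T : (X -> R) -> (Y -> R)) : Prop :=
  [/\ (forall f, A f -> B (T f)),
      (forall (a : R) f g, A f -> A g ->
          T (fun x => a * f x + g x) = (fun y => a * T f y + T g y)),
      (forall f g, A f -> A g -> T f = T g -> f = g),
      (forall g, B g -> exists2 f, A f & T f = g) &
      (forall f, A f -> ((forall x, 0 <= f x) <-> (forall y, 0 <= T f y)))].

(* Main.v *)
Require Import Defs.
From HB Require Import structures.
From mathcomp Require Import all_boot all_order all_algebra.
From mathcomp Require Import all_classical all_reals all_analysis.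
From mathcomp Require Import ring lra finmap.
Import Order.TTheory GRing.Theory Num.Theory.
Import numFieldNormedType.Exports.
Local Open Scope classical_set_scope.
Local Open Scope ring_scope.
Set Implicit Arguments.

Definition withpt (T : topologicalType) (x : T) : Type := T.
HB.instance Definition _ (T : topologicalType) (x : T) := Topological.copy (withpt T x) T.
HB.instance Definition _ (T : topologicalType) (x : T) := isPointed.Build (withpt T x) x.

Lemma cover_fin (T : topologicalType) (x : T) (K : set T) (I : choiceType) (D : set I) (f : I -> set T) :
  compact K -> (forall i, D i -> open (f i)) -> K `<=` cover D f -> finite_subset_cover D f K.
Proof.
move=> cK.
have : @compact (withpt T x) K := cK.
rewrite compact_cover; apply.
Qed.

Lemma bounded_cont (R : realType) (X : topologicalType) (f : X -> R) :
  compact [set: X] -> continuous f -> exists M, 0 <= M /\ forall x, `|f x| <= M.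
Proof.
move=> cX fc.
have := @compact_bounded R R^o _ (continuous_compact (continuous_subspaceT fc) cX).
move=> [M [_ HM]].
exists (`|M| + 1); split; first by rewrite addr_ge0.
move=> x; apply: (HM (`|M| + 1)); last by exists x.
by rewrite (le_lt_trans (ler_norm M)) // ltrDl.
Qed.

Section Main.
Variables (R : realType) (X Y : topologicalType) (A : set (X -> R)) (B : set (Y -> R))
  (T : (X -> R) -> (Y -> R)).
Hypotheses (cX : compact [set: X]) (hX : hausdorff_space X)
  (fsA : is_function_space A) (cA : contains_constants A) (psA : precisely_separates A)
  (fsB : is_function_space B) (cB : contains_constants B) (psB : precisely_separates B)
  (iso : linear_order_iso A B T).

Let e := T (fun _ => 1).

Lemma Acont f : A f -> continuous f.
Proof. by case: fsA => + _ _ _; apply. Qed.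

Lemma Bcont g : B g -> continuous g.
Proof. by case: fsB => + _ _ _; apply. Qed.

Lemma Alin a f g : A f -> A g -> A (fun x => a * f x + g x).
Proof. by case: fsA => _ _ Hadd Hsc Af Ag; apply: Hadd => //; apply: Hsc. Qed.

Lemma Blin a f g : B f -> B g -> B (fun x => a * f x + g x).
Proof. by case: fsB => _ _ Hadd Hsc Af Ag; apply: Hadd => //; apply: Hsc. Qed.

Lemma TB f : A f -> B (T f).
Proof. by case: iso => + _ _ _ _; apply. Qed.

Lemma Tlin a f g y : A f -> A g -> T (fun x => a * f x + g x) y = a * T f y + T g y.
Proof. by case: iso => _ + _ _ _ => H Af Ag; rewrite H. Qed.

Lemma T0 : T (fun _ => 0) = (fun _ => 0).
Proof.
have A0 : A (fun _ : X => 0) by case: fsA.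
apply: funext => y.
have := Tlin 1 y A0 A0.
have -> : (fun x : X => 1 * 0 + 0) = (fun _ => 0 : R) by apply: funext => x; rewrite mul1r addr0.
lra.
Qed.

Lemma Tscale a f y : A f -> T (fun x => a * f x) y = a * T f y.
Proof.
move=> Af; have A0 : A (fun _ : X => 0) by case: fsA.
have -> : (fun x => a * f x) = (fun x => a * f x + (fun _ => 0) x).
  by apply: funext => x; rewrite addr0.
by rewrite Tlin // T0 addr0.
Qed.

Lemma Tconst c y : T (fun _ => c) y = c * e y.
Proof.
have -> : (fun _ : X => c) = (fun x => c * (fun _ => 1) x).
  by apply: funext => x; rewrite mulr1.
by rewrite Tscale.
Qed.

Lemma Tpos f : A f -> (forall x, 0 <= f x) -> forall y, 0 <= T f y.
Proof. by case: iso => _ _ _ _ H Af; move/(H f Af). Qed.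

Lemma Tmono f g : A f -> A g -> (forall x, f x <= g x) -> forall y, T f y <= T g y.
Proof.
move=> Af Ag fg y.
have := Tpos (Alin (-1) Af Ag) _ y; rewrite Tlin //.
have H : forall x : X, 0 <= -1 * f x + g x by move=> x; have := fg x; lra.
move/(_ H); lra.
Qed.

Lemma e_ge0 y : 0 <= e y.
Proof. by apply: Tpos => // x; lra. Qed.

Lemma e_gt0 y : 0 < e y.
Proof.
rewrite lt_def e_ge0 andbT; apply/eqP => ey0.
case: iso => _ _ _ surj _.
have [u Au Tu] := surj _ (cB 1).
have [M [M0 HM]] := bounded_cont cX (Acont Au).
have := Tmono Au (cA M) _ y; rewrite Tconst ey0 mulr0 Tu.
have H : forall x, u x <= M by move=> x; have := HM x; rewrite ler_norml => /andP[].
move/(_ H); lra.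
Qed.

Definition NP y x := exists U, [/\ open U, U x &
  forall f, A f -> (forall z, 0 <= f z) -> (forall z, ~ U z -> f z = 0) -> T f y <= 0].

Lemma sumA (I : eqType) (g : I -> X -> R) (l : seq I) :
  (forall i, i \in l -> A (g i)) -> A (fun z => \sum_(i <- l) g i z).
Proof.
elim: l => [|a l IH] H.
  have -> : (fun z => \sum_(i <- [::]) g i z) = (fun _ => 0).
    by apply: funext => z; rewrite big_nil.
  by case: fsA.
have -> : (fun z => \sum_(i <- a :: l) g i z) = (fun z => 1 * g a z + \sum_(i <- l) g i z).
  by apply: funext => z; rewrite big_cons mul1r.
apply: Alin; first by apply: H; rewrite mem_head.
by apply: IH => i il; apply: H; rewrite in_cons il orbT.
Qed.

Lemma sumT (I : eqType) (g : I -> X -> R) (l : seq I) y :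
  (forall i, i \in l -> A (g i)) -> T (fun z => \sum_(i <- l) g i z) y = \sum_(i <- l) T (g i) y.
Proof.
elim: l => [|a l IH] H.
  have -> : (fun z => \sum_(i <- [::]) g i z) = (fun _ => 0).
    by apply: funext => z; rewrite big_nil.
  by rewrite T0 big_nil.
have -> : (fun z => \sum_(i <- a :: l) g i z) = (fun z => 1 * g a z + \sum_(i <- l) g i z).
  by apply: funext => z; rewrite big_cons mul1r.
have H' : forall i, i \in l -> A (g i) by move=> i il; apply: H; rewrite in_cons il orbT.
rewrite Tlin ?IH // ?big_cons ?mul1r //; first by apply: H; rewrite mem_head.
exact: sumA.
Qed.

Lemma sum_ge (I : eqType) (g : I -> R) (l : seq I) i :
  (forall j, j \in l -> 0 <= g j) -> i \in l -> g i <= \sum_(j <- l) g j.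
Proof.
elim: l => [|a l IH] // g0; rewrite in_cons big_cons => /orP[/eqP ->|il].
  have : 0 <= \sum_(j <- l) g j.
    by rewrite big_seq; apply: sumr_ge0 => j jl; apply: g0; rewrite in_cons jl orbT.
  lra.
have H' : forall j, j \in l -> 0 <= g j by move=> j jl; apply: g0; rewrite in_cons jl orbT.
have := IH H' il; have := g0 a (mem_head _ _); lra.
Qed.

Lemma cover_lemma y (F : set X) : closed F -> (forall x, F x -> NP y x) ->
  exists s, [/\ A s, forall z, 0 <= s z, forall z, F z -> 2^-1 < s z & T s y <= 0].
Proof.
move=> cF HF.
case: (pselect (exists x, F x)) => [[x0 Fx0]|nF]; last first.
  exists (fun _ => 0); split.
  - by case: fsA.
  - by [].
  - by move=> z Fz; exfalso; apply: nF; exists z.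
  - by rewrite T0.
have cF' : compact F := subclosed_compact cF cX (@subsetT _ F).
have Hc : forall x, exists f : X -> R, F x -> [/\ A f, (forall z, 0 <= f z), f x = 1 & T f y <= 0].
  move=> x; case: (pselect (F x)) => Fx; last by exists (fun _ => 0).
  have [U [oU Ux HU]] := HF x Fx.
  have [f [Af fx1 f0 f01]] := psA x (open_closedC oU) (fun h => h Ux).
  have f0' : forall z, 0 <= f z by move=> z; case/andP: (f01 z).
  exists f => _; split => //.
  by apply: HU => // z nUz; apply: f0.
case: (choice Hc) => fx Hfx.
have [] := @cover_fin X x0 F X F (fun i => [set z | 2^-1 < fx i z]) cF'.
- move=> i Fi; have [Ai _ _ _] := Hfx i Fi.
  apply: (@open_comp _ _ (fx i) [set r | 2^-1 < r]); last exact: open_gt.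
  by move=> z _; apply: Acont.
- move=> x Fx; exists x => //=; have [_ _ -> _] := Hfx x Fx; lra.
move=> D' sub cov.
have FD : forall i, i \in enum_fset D' -> F i.
  by move=> i iD; have := sub i iD; rewrite in_setE.
have AD : forall i, i \in enum_fset D' -> A (fx i).
  by move=> i /FD Fi; have [] := Hfx i Fi.
have pD : forall i z, i \in enum_fset D' -> 0 <= fx i z.
  by move=> i z /FD Fi; have [] := Hfx i Fi.
exists (fun z => \sum_(i <- enum_fset D') fx i z); split.
- exact: sumA.
- by move=> z; rewrite big_seq; apply: sumr_ge0 => i iD; apply: pD.
- move=> z Fz; have [i iD Hi] := cov z Fz.
  apply: (lt_le_trans Hi); apply: (@sum_ge _ (fun j => fx j z)) => //.
  by move=> j jD; apply: pD.
- rewrite sumT // big_seq; apply: sumr_le0 => i iD.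
  by have [] := Hfx i (FD i iD).
Qed.

Lemma NP_ex y : exists x, ~ NP y x.
Proof.
apply: contrapT => H.
have H' : forall x, NP y x.
  by move=> x; apply: contra_notP H => nx; exists x.
have [s [As s0 s2 Ts]] := @cover_lemma y setT closedT (fun x _ => H' x).
have Ac : A (fun _ : X => -1) by apply: cA.
have := Tpos (Alin 2 As Ac) _ y; rewrite Tlin // Tconst.
have Hp : forall x, 0 <= 2 * s x + -1 by move=> x; have := s2 x I; lra.
move/(_ Hp); have := e_gt0 y; lra.
Qed.

Lemma NP_pos y x U : ~ NP y x -> open U -> U x ->
  exists f, [/\ A f, forall z, 0 <= f z, forall z, ~ U z -> f z = 0 & 0 < T f y].
Proof.
move=> nx oU Ux; apply: contra_notP nx => H; exists U; split => // f Af fp fs.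
rewrite leNgt; apply/negP => Tf; apply: H; exists f; split => //.
Qed.

Lemma NP_uniq y x1 x2 : ~ NP y x1 -> ~ NP y x2 -> x1 = x2.
Proof.
move=> n1 n2; case: (eqVneq x1 x2) => // ne; exfalso.
move: hX; rewrite open_hausdorff => /(_ x1 x2 ne) [[U1 U2] /= [U1x1 U2x2] [oU1 oU2 /eqP U12]].
rewrite in_setE in U1x1; rewrite in_setE in U2x2.
have [f1 [Af1 f1p f1s Tf1]] := NP_pos U1 n1 oU1 U1x1.
have [f2 [Af2 f2p f2s Tf2]] := NP_pos U2 n2 oU2 U2x2.
set m := Order.min (T f1 y / 2) (T f2 y / 2).
have m0 : 0 < m by rewrite lt_min; apply/andP; split; lra.
have m1 : m <= T f1 y / 2 by rewrite ge_min lexx.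
have m2 : m <= T f2 y / 2 by rewrite ge_min lexx orbT.
pose V := [set z | m < T f1 z] `&` [set z | m < T f2 z].
have oV : open V.
  apply: openI.
    apply: (@open_comp _ _ (T f1) [set r | m < r]); last exact: open_gt.
    by move=> z _; apply: Bcont; apply: TB.
  apply: (@open_comp _ _ (T f2) [set r | m < r]); last exact: open_gt.
  by move=> z _; apply: Bcont; apply: TB.
have Vy : V y by split => /=; lra.
have [g [Bg gy g0 g01]] := psB y (open_closedC oV) (fun h => h Vy).
have Bh : B (fun z => m * g z + (fun _ => 0) z) by apply: Blin => //; case: fsB.
case: iso => _ _ inj surj ord.
have [u Au Tu] := surj _ Bh.
have Tf1p := Tpos Af1 f1p; have Tf2p := Tpos Af2 f2p.
have hle : forall (f : X -> R), A f -> (forall z, 0 <= f z) -> (forall z, V z -> m < T f z) ->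
    forall x, u x <= f x.
  move=> f Af fp fV x.
  have H := Tpos (Alin (-1) Au Af).
  have : forall z, 0 <= T (fun x => -1 * u x + f x) z.
    move=> z; rewrite Tlin // Tu.
    have := g01 z; have := Tpos Af fp z.
    case: (pselect (V z)) => Vz; first by have := fV z Vz; nra.
    by rewrite g0 //; lra.
  move/(ord _ (Alin (-1) Au Af))/(_ x); lra.
have u1 := hle f1 Af1 f1p (fun z Vz => proj1 Vz).
have u2 := hle f2 Af2 f2p (fun z Vz => proj2 Vz).
have up : forall x, 0 <= u x.
  apply/(ord _ Au) => z; rewrite Tu; have := g01 z; nra.
have u0 : u = (fun _ => 0).
  apply: funext => x; apply: le_anti; rewrite up andbT.
  case: (pselect (U1 x)) => [U1x|nU1]; last by have := u1 x; rewrite f1s.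
  case: (pselect (U2 x)) => [U2x|nU2]; last by have := u2 x; rewrite f2s.
  by have : (U1 `&` U2) x by []; rewrite U12.
have := congr1 (fun f => f y) Tu; rewrite u0 T0 /= gy; lra.
Qed.

Definition kmap y := projT1 (cid (NP_ex y)).

Lemma kmapP y : ~ NP y (kmap y).
Proof. exact: (projT2 (cid (NP_ex y))). Qed.

Lemma formula f : A f -> forall y, T f y = e y * f (kmap y).
Proof.
move=> Af y; set x0 := kmap y.
have nx0 : ~ NP y x0 := @kmapP y.
pose g := fun x => 1 * f x + (fun _ => - f x0) x.
have Ag : A g by apply: Alin.
have Tg : T g y = T f y - f x0 * e y by rewrite /g Tlin // Tconst mul1r mulNr.
have g0 : g x0 = 0 by rewrite /g; lra.
have [M [M0 HM]] := bounded_cont cX (Acont Ag).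
have key : forall d, 0 < d -> `|T g y| <= d * e y.
  move=> d d0.
  pose F := ~` ([set z | g z < d] `&` [set z | - d < g z]).
  have cF : closed F.
    apply: open_closedC; apply: openI.
      apply: (@open_comp _ _ g [set r | r < d]); last exact: open_lt.
      by move=> z _; apply: Acont.
    apply: (@open_comp _ _ g [set r | -d < r]); last exact: open_gt.
    by move=> z _; apply: Acont.
  have HF : forall x, F x -> NP y x.
    move=> x Fx; apply: contrapT => nx; have ex := NP_uniq nx nx0.
    by apply: Fx; rewrite ex; split => /=; rewrite g0; lra.
  have [s [As s0 s2 Ts]] := cover_lemma cF HF.
  pose w := fun x => (2 * M) * s x + (fun _ => d) x.
  have Aw : A w by apply: Alin.
  have Tw : T w y <= d * e y.
    by rewrite /w Tlin // Tconst; have := e_ge0 y; nra.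
  have bnd : forall x, -M <= g x <= M by move=> x; rewrite -ler_norml.
  have bw : forall x, g x <= w x /\ - g x <= w x.
    move=> x; have /andP[lo hi] := bnd x; have := s0 x; rewrite /w.
    case: (pselect (F x)) => Fx; first by have := s2 x Fx; split; nra.
    have [h1 h2] : g x < d /\ -d < g x by apply: contrapT.
    split; nra.
  have t1 : T g y <= T w y := Tmono Ag Aw (fun x => proj1 (bw x)) y.
  have Ang : A (fun x => -1 * g x).
    have -> : (fun x => -1 * g x) = (fun x => -1 * g x + (fun _ => 0) x).
      by apply: funext => x; rewrite addr0.
    by apply: Alin.
  have t2 := Tmono Ang Aw (fun x => (_ : -1 * g x <= w x)) y.
  rewrite Tscale // in t2.
  have t2' : -1 * T g y <= T w y by apply: t2 => x; have [_ h] := bw x; lra.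
  rewrite ler_norml; apply/andP; split; lra.
have Tg0 : T g y = 0.
  apply/eqP; rewrite -normr_eq0; apply/eqP; apply: le_anti; rewrite normr_ge0 andbT.
  rewrite leNgt; apply/negP => apos.
  have ey := e_gt0 y.
  have hd : 0 < `|T g y| / (2 * e y) by apply: divr_gt0 => //; lra.
  have := key _ hd.
  have -> : `|T g y| / (2 * e y) * e y = `|T g y| / 2 by field; lra.
  lra.
by rewrite mulrC; lra.
Qed.

Lemma kmap_cont : continuous kmap.
Proof.
apply/continuousP => U oU.
rewrite openE => y /= Uky.
have [f [Af f1 f0 f01]] := psA (kmap y) (open_closedC oU) (fun h => h Uky).
have Tfy : T f y = e y by rewrite formula // f1 mulr1.
have cvg : T f z @[z --> y] --> T f y := Bcont (TB Af) y.
have := cvgr_gt _ cvg 0; rewrite Tfy => /(_ _ (e_gt0 y)).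
rewrite /interior; apply: filterS => z /= Tz.
apply: contrapT => nU; move: Tz; rewrite formula // f0 // mulr0 ltxx.
by [].
Qed.

Lemma exists_k : exists k : Y -> X, [/\ continuous k,
  (forall f, A f -> forall y, T f y = T (fun _ => 1) y * f (k y)) &
  forall y, 0 < T (fun _ => 1) y].
Proof. exists kmap; split; [exact: kmap_cont | exact: formula | exact: e_gt0]. Qed.

End Main.

Lemma sep_eq (R : realType) (Z : topologicalType) (C : set (Z -> R)) (z z' : Z) (c : R) :
  hausdorff_space Z -> precisely_separates C -> (forall f, C f -> f z = c * f z') -> z = z'.
Proof.
move=> hZ ps H; case: (eqVneq z z') => // ne; exfalso.
move: hZ; rewrite open_hausdorff => /(_ z z' ne) [[U V] /= [Uz Vz'] [oU oV /eqP UV]].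
rewrite in_setE in Uz; rewrite in_setE in Vz'.
have [f [Cf fz f0 _]] := ps z _ (open_closedC oU) (fun h => h Uz).
have nU : ~ U z'.
  by move=> Uz'; have : (U `&` V) z' by []; rewrite UV.
have := H f Cf; rewrite fz f0 ?mulr0 //.
by move/eqP; rewrite oner_eq0.
Qed.



Unset Implicit Arguments.

Theorem theorem2p1 (R : realType) (X Y : topologicalType)
  (A : set (X -> R)) (B : set (Y -> R)) (T : (X -> R) -> (Y -> R)) :
  compact [set: X] -> hausdorff_space X ->
  compact [set: Y] -> hausdorff_space Y ->
  is_function_space A -> contains_constants A -> precisely_separates A ->
  is_function_space B -> contains_constants B -> precisely_separates B ->
  linear_order_iso A B T ->
  exists (h : X -> Y) (hinv : Y -> X),
    [/\ continuous h, continuous hinv, cancel h hinv, cancel hinv h &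
        forall f, A f -> forall y : Y, T f y = T (fun _ => 1) y * f (hinv y)].
Proof.
move=> cX hX cY hY fsA cA psA fsB cB psB iso.
have iso0 := iso; case: iso0 => TB lin inj surj ord.
have Hc : forall g, exists f, B g -> A f /\ T f = g.
  move=> g; case: (pselect (B g)) => Bg; last by exists (fun _ => 0).
  by have [f Af Tf] := surj g Bg; exists f.
case: (choice Hc) => Ti HTi.
have AlinX : forall a f g, A f -> A g -> A (fun x => a * f x + g x).
  by case: fsA => _ _ Hadd Hsc a f g Af Ag; apply: Hadd => //; apply: Hsc.
have BlinY : forall a f g, B f -> B g -> B (fun x => a * f x + g x).
  by case: fsB => _ _ Hadd Hsc a f g Af Ag; apply: Hadd => //; apply: Hsc.
have iso' : linear_order_iso B A Ti.
  split.
  - by move=> g Bg; case: (HTi g Bg).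
  - move=> a g1 g2 B1 B2.
    have [A1 T1] := HTi _ B1; have [A2 T2] := HTi _ B2.
    have [Ac Tc] := HTi _ (BlinY a _ _ B1 B2).
    apply: inj => //; first exact: AlinX.
    by rewrite Tc lin // T1 T2.
  - move=> g1 g2 B1 B2 E; have [_ T1] := HTi _ B1; have [_ T2] := HTi _ B2.
    by rewrite -T1 -T2 E.
  - move=> f Af; exists (T f); first exact: TB.
    by have [A' T'] := HTi _ (TB f Af); apply: inj.
  - move=> g Bg; have [A' T'] := HTi _ Bg.
    by move: (ord _ A'); rewrite T' => -[h1 h2]; split.
have [k [kc kf ke]] := exists_k cX hX fsA cA psA fsB cB psB iso.
have [k' [kc' kf' ke']] := exists_k cY hY fsB cB psB fsA cA psA iso'.
exists k', k; split => //.
- move=> x; symmetry.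
  apply: (@sep_eq R X A x (k (k' x)) (Ti (fun _ => 1) x * T (fun _ => 1) (k' x))) => // f Af.
  have [A' T'] := HTi _ (TB f Af).
  have E : Ti (T f) = f by apply: inj.
  rewrite -{1}E kf'; last exact: TB.
  by rewrite (kf f Af) mulrA.
- move=> y; symmetry.
  apply: (@sep_eq R Y B y (k' (k y)) (T (fun _ => 1) y * Ti (fun _ => 1) (k y))) => // g Bg.
  have [A' T'] := HTi _ Bg.
  by rewrite -{1}T' kf // (kf' g Bg) mulrA.
Qed.
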